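(* Fix integers $p,q\ge 0$ and integers $L_1,\dots,L_q\ge 1$. Fix an observation $(x,y)$ with $x=(x_1,\dots,x_p)\in\mathbb{R}^p$ and $y=(y_1,\dots,y_q)$, $y_j\in\{1,\dots,L_j\}$. Consider the parameters $\Theta=\{\beta_{ss},\beta_{st},\alpha_s,\rho_{sj},\phi_{rj}\}$, where $\beta_{st}=\beta_{ts}\in\mathbb{R}$ for $s,t\in\{1,\dots,p\}$, $\alpha_s\in\mathbb{R}$, $\rho_{sj}=(\rho_{sj}(1),\dots,\rho_{sj}(L_j))\in\mathbb{R}^{L_j}$ for $s\le p$, $j\le q$, and $\phi_{rj}\in\mathbb{R}^{L_r\times L_j}$ for $r,j\le q$ with $\phi_{rj}(a,b)=\phi_{jr}(b,a)$ (so symmetric pairs are one and the same parameter). Define the negative log pseudolikelihood $$\tilde\ell(\Theta\mid x,y)=-\sum_{s=1}^p\log p(x_s\mid x_{\setminus s},y;\Theta)-\sum_{r=1}^q\log p(y_r\mid x,y_{\setminus r};\Theta),$$ where $$p(x_s\mid x_{\setminus s},y;\Theta)=\frac{\sqrt{\beta_{ss}}}{\sqrt{2\pi}}\exp\!\left(-\frac{\beta_{ss}}{2}\left(\frac{\alpha_s+\sum_{j=1}^q\rho_{sj}(y_j)-\sum_{t\ne s}\beta_{st}x_t}{\beta_{ss}}-x_s\right)^2\right)$$ and $$p(y_r\mid x,y_{\setminus r};\Theta)=\frac{\exp\!\left(\sum_{s=1}^p\rho_{sr}(y_r)x_s+\phi_{rr}(y_r,y_r)+\sum_{j\ne r}\phi_{rj}(y_r,y_j)\right)}{\sum_{l=1}^{L_r}\exp\!\left(\sum_{s=1}^p\rho_{sr}(l)x_s+\phi_{rr}(l,l)+\sum_{j\ne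 r}\phi_{rj}(l,y_j)\right)}.$$ Then $\tilde\ell(\Theta\mid x,y)$ is jointly convex in all the parameters $\{\beta_{ss},\beta_{st},\alpha_s,\phi_{rj},\rho_{sj}\}$ over the region where $\beta_{ss}>0$ for all $s=1,\dots,p$.
   Context: This is the pseudolikelihood of a pairwise mixed graphical model on $p$ continuous variables $x_s$ and $q$ discrete variables $y_j$ (taking $L_j$ states), with joint density proportional to $\exp\big(\sum_{s,t}-\tfrac12\beta_{st}x_sx_t+\sum_s\alpha_sx_s+\sum_{s,j}\rho_{sj}(y_j)x_s+\sum_{r,j}\phi_{rj}(y_r,y_j)\big)$; the displayed conditionals are the Gaussian (for $x_s$) and multinomial-logistic (for $y_r$) conditional distributions of this model. Here $x_{\setminus s}$ denotes all continuous coordinates except $x_s$ and $y_{\setminus r}$ all discrete coordinates except $y_r$. *)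

(* Defs.v *)
From mathcomp Require Import all_boot all_order all_algebra.
From mathcomp Require Import all_classical all_reals all_analysis.
Set Implicit Arguments. Unset Strict Implicit. Unset Printing Implicit Defensive.
Import Order.TTheory GRing.Theory Num.Theory.
Local Open Scope ring_scope.

(* Continuous variables are indexed by 'I_p, discrete ones by 'I_q;
   the discrete variable j takes states in 'I_(L j) (0-based, i.e. state
   l+1 of the paper is the ordinal l). *)
Record mgm_param (R : realType) (p q : nat) (L : 'I_q -> nat) := MgmParam {
  beta  : 'I_p -> 'I_p -> R;
  alpha : 'I_p -> R;
  rho   : 'I_p -> forall j : 'I_q, 'I_(L j) -> R;
  phi   : forall r j : 'I_q, 'I_(L r) -> 'I_(L j) -> R }.
Arguments rho {R p q L} m s j a.
Arguments phi {R p q L} m r j a b.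

Definition mgm_admissible (R : realType) p q (L : 'I_q -> nat)
  (th : mgm_param R p L) : Prop :=
  (forall s t : 'I_p, beta th s t = beta th t s) /\
  (forall (r j : 'I_q) (a : 'I_(L r)) (b : 'I_(L j)),
      phi th r j a b = phi th j r b a) /\
  (forall s : 'I_p, 0 < beta th s s).

Definition mgm_comb (R : realType) p q (L : 'I_q -> nat) (t : R)
  (th1 th2 : mgm_param R p L) : mgm_param R p L :=
  MgmParam
    (fun s u => t * beta th1 s u + (1 - t) * beta th2 s u)
    (fun s => t * alpha th1 s + (1 - t) * alpha th2 s)
    (fun s j a => t * rho th1 s j a + (1 - t) * rho th2 s j a)
    (fun r j a b => t * phi th1 r j a b + (1 - t) * phi th2 r j a b).

Definition cond_x (R : realType) p q (L : 'I_q -> nat) (th : mgm_param R p L)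
  (x : 'I_p -> R) (y : forall j : 'I_q, 'I_(L j)) (s : 'I_p) : R :=
  let bss := beta th s s in
  let m := (alpha th s + \sum_(j < q) rho th s j (y j)
            - \sum_(u < p | u != s) beta th s u * x u) / bss in
  Num.sqrt bss / Num.sqrt (2 * pi) * expR (- (bss / 2) * (m - x s) ^+ 2).

Definition cond_y (R : realType) p q (L : 'I_q -> nat) (th : mgm_param R p L)
  (x : 'I_p -> R) (y : forall j : 'I_q, 'I_(L j)) (r : 'I_q) : R :=
  let E := fun l : 'I_(L r) =>
    \sum_(s < p) rho th s r l * x s + phi th r r l l
    + \sum_(j < q | j != r) phi th r j l (y j) in
  expR (E (y r)) / \sum_(l < L r) expR (E l).

Definition neg_log_pl (R : realType) p q (L : 'I_q -> nat)
  (th : mgm_param R p L) (x : 'I_p -> R) (y : forall j : 'I_q, 'I_(L j)) : R :=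
  - \sum_(s < p) ln (cond_x th x y s) - \sum_(r < q) ln (cond_y th x y r).

(* Main.v *)
Require Import Defs.
From mathcomp Require Import all_boot all_order all_algebra.
From mathcomp Require Import all_classical all_reals all_analysis.
From mathcomp Require Import ring lra.
Import Order.TTheory GRing.Theory Num.Theory.
Local Open Scope ring_scope.

Section H.
Variable R : realType.
Implicit Types (a b t : R).

Lemma expR_cvx t a b : 0 <= t -> t <= 1 ->
  expR (t * a + (1 - t) * b) <= t * expR a + (1 - t) * expR b.
Proof.
move=> t0 t1.
have := @convex_expR R (Itv01 t0 t1) a b.
by rewrite !convRE /=.
Qed.

Lemma ln_sqrt a : 0 < a -> ln (Num.sqrt a) = ln a / 2.
Proof.
move=> a0.
have -> : ln a = ln (Num.sqrt a ^+ 2) by rewrite sqr_sqrtr // ltW.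
by rewrite lnXn ?sqrtr_gt0 // mulr2n; field.
Qed.

Lemma ln_cvx t a b : 0 <= t -> t <= 1 -> 0 < a -> 0 < b ->
  t * ln a + (1 - t) * ln b <= ln (t * a + (1 - t) * b).
Proof.
move=> t0 t1 a0 b0.
have := @concave_ln R (Itv01 t0 t1) a b a0 b0.
by rewrite !convRE /=.
Qed.

Lemma quad_cvx t u1 u2 b1 b2 : 0 <= t -> t <= 1 -> 0 < b1 -> 0 < b2 ->
  (t * u1 + (1 - t) * u2) ^+ 2 / (t * b1 + (1 - t) * b2)
  <= t * (u1 ^+ 2 / b1) + (1 - t) * (u2 ^+ 2 / b2).
Proof.
move=> t0 t1 b10 b20.
have B : 0 < t * b1 + (1 - t) * b2.
  have [->|tp] := eqVneq t 0; first by rewrite mul0r add0r subr0 mul1r.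
  apply: ltr_pwDl; last by rewrite mulr_ge0 // ?subr_ge0 // ltW.
  by rewrite mulr_gt0 // lt_neqAle eq_sym tp t0.
rewrite ler_pdivrMr // -subr_ge0.
have -> : (t * (u1 ^+ 2 / b1) + (1 - t) * (u2 ^+ 2 / b2)) * (t * b1 + (1 - t) * b2)
   - (t * u1 + (1 - t) * u2) ^+ 2 = t * (1 - t) * (u1 * b2 - u2 * b1) ^+ 2 / (b1 * b2).
  by field; rewrite ?gt_eqF.
apply: divr_ge0; last by apply: mulr_ge0; apply: ltW.
by apply: mulr_ge0; [apply: mulr_ge0; lra | exact: sqr_ge0].
Qed.
End H.
Section H2.
Variable R : realType.

Lemma sum_expR_gt0 n (n0 : (0 < n)%N) (a : 'I_n -> R) : 0 < \sum_(l < n) expR (a l).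
Proof.
case: n n0 a => [//|n] _ a.
rewrite big_ord_recl; apply: ltr_pwDl; first exact: expR_gt0.
by apply: sumr_ge0 => i _; exact: expR_ge0.
Qed.

Lemma lse_cvx n (n0 : (0 < n)%N) (a b : 'I_n -> R) (t : R) : 0 <= t -> t <= 1 ->
  ln (\sum_(l < n) expR (t * a l + (1 - t) * b l))
  <= t * ln (\sum_(l < n) expR (a l)) + (1 - t) * ln (\sum_(l < n) expR (b l)).
Proof.
move=> t0 t1.
set A := \sum_(l < n) expR (a l); set B := \sum_(l < n) expR (b l).
have A0 : 0 < A by exact: sum_expR_gt0.
have B0 : 0 < B by exact: sum_expR_gt0.
set c := t * ln A + (1 - t) * ln B.
rewrite -[X in _ <= X](expRK c) ler_ln ?posrE ?expR_gt0 ?sum_expR_gt0 //.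
apply: (@le_trans _ _ (\sum_(l < n) expR c * (t * (expR (a l) / A) + (1 - t) * (expR (b l) / B)))).
  apply: ler_sum => l _.
  have -> : t * a l + (1 - t) * b l = c + (t * (a l - ln A) + (1 - t) * (b l - ln B)).
    rewrite /c; ring.
  rewrite expRD ler_wpM2l ?expR_ge0 //.
  have eA : expR (a l - ln A) = expR (a l) / A by rewrite expRD expRN lnK.
  have eB : expR (b l - ln B) = expR (b l) / B by rewrite expRD expRN lnK.
  by rewrite -eA -eB; apply: expR_cvx.
rewrite -mulr_sumr big_split /= -!mulr_sumr -!mulr_suml -/A -/B !divff ?gt_eqF //.
by rewrite !mulr1 addrC subrK mulr1.
Qed.
End H2.
Section H3.
Variables (R : realType) (p q : nat) (L : 'I_q -> nat).
Variables (x : 'I_p -> R) (y : forall j : 'I_q, 'I_(L j)).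

Definition cx (th : mgm_param R p L) (s : 'I_p) : R :=
  alpha th s + \sum_(j < q) rho th s j (y j)
            - \sum_(u < p | u != s) beta th s u * x u.

Lemma ln_cond_x th s : 0 < beta th s s ->
  ln (cond_x th x y s) = ln (beta th s s) / 2 - ln (2 * pi) / 2
     - ((cx th s - beta th s s * x s) ^+ 2 / beta th s s) / 2.
Proof.
move=> b0.
have p0 : 0 < 2 * pi :> R by rewrite mulr_gt0 ?pi_gt0.
rewrite /cond_x [ln (_ * expR _)]lnM ?posrE ?divr_gt0 ?sqrtr_gt0 ?expR_gt0 // ln_div ?posrE ?sqrtr_gt0 //.
rewrite expRK !ln_sqrt // -/(cx th s).
by field; rewrite gt_eqF.
Qed.

Lemma cx_comb t th1 th2 s :
  cx (mgm_comb t th1 th2) s = t * cx th1 s + (1 - t) * cx th2 s.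
Proof.
rewrite /cx /=.
rewrite (eq_bigr (fun u => t * (beta th1 s u * x u) + (1 - t) * (beta th2 s u * x u)));
  last by move=> u _; ring.
rewrite !big_split /= -!mulr_sumr; ring.
Qed.

Definition Ey (th : mgm_param R p L) (r : 'I_q) (l : 'I_(L r)) : R :=
    \sum_(s < p) rho th s r l * x s + phi th r r l l
    + \sum_(j < q | j != r) phi th r j l (y j).

Lemma ln_cond_y th r : (0 < L r)%N ->
  ln (cond_y th x y r) = Ey th r (y r) - ln (\sum_(l < L r) expR (Ey th r l)).
Proof.
move=> L0.
by rewrite /cond_y ln_div ?posrE ?expR_gt0 ?sum_expR_gt0 // expRK.
Qed.

Lemma Ey_comb t th1 th2 r l :
  Ey (mgm_comb t th1 th2) r l = t * Ey th1 r l + (1 - t) * Ey th2 r l.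
Proof.
rewrite /Ey /=.
rewrite (eq_bigr (fun u => t * (rho th1 u r l * x u) + (1 - t) * (rho th2 u r l * x u)));
  last by move=> u _; ring.
rewrite !big_split /= -!mulr_sumr; ring.
Qed.

Lemma conv_gt0 (t b1 b2 : R) : 0 <= t -> t <= 1 -> 0 < b1 -> 0 < b2 ->
  0 < t * b1 + (1 - t) * b2.
Proof.
move=> t0 t1 b10 b20.
have [->|tp] := eqVneq t 0; first by rewrite mul0r add0r subr0 mul1r.
apply: ltr_pwDl; last by rewrite mulr_ge0 // ?subr_ge0 // ltW.
by rewrite mulr_gt0 // lt_neqAle eq_sym tp t0.
Qed.

Lemma term_x t th1 th2 s : 0 <= t -> t <= 1 ->
  0 < beta th1 s s -> 0 < beta th2 s s ->
  - ln (cond_x (mgm_comb t th1 th2) x y s)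
  <= t * - ln (cond_x th1 x y s) + (1 - t) * - ln (cond_x th2 x y s).
Proof.
move=> t0 t1 b1 b2.
have bc := conv_gt0 _ _ _ t0 t1 b1 b2.
rewrite !ln_cond_x // cx_comb /=.
have Hln := ln_cvx _ _ _ _ t0 t1 b1 b2.
have Hq := quad_cvx _ t (cx th1 s - beta th1 s s * x s) (cx th2 s - beta th2 s s * x s) _ _ t0 t1 b1 b2.
have -> : t * cx th1 s + (1 - t) * cx th2 s - (t * beta th1 s s + (1 - t) * beta th2 s s) * x s
  = t * (cx th1 s - beta th1 s s * x s) + (1 - t) * (cx th2 s - beta th2 s s * x s) by ring.
move: Hln Hq.
set Lc := ln _; set L1 := ln (beta th1 s s); set L2 := ln (beta th2 s s).
set Qc := _ / (_ + _); set Q1 := _ / beta th1 s s; set Q2 := _ / beta th2 s s.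
move=> Hln Hq. nra.
Qed.

Lemma term_y t th1 th2 r : 0 <= t -> t <= 1 -> (0 < L r)%N ->
  - ln (cond_y (mgm_comb t th1 th2) x y r)
  <= t * - ln (cond_y th1 x y r) + (1 - t) * - ln (cond_y th2 x y r).
Proof.
move=> t0 t1 L0.
rewrite !ln_cond_y // Ey_comb.
under eq_bigr => l _ do rewrite Ey_comb.
have H := lse_cvx _ _ L0 (Ey th1 r) (Ey th2 r) _ t0 t1.
move: H; set A := ln _; set A1 := ln _; set A2 := ln _.
move=> H; nra.
Qed.
End H3.

Theorem proposition1 (R : realType) (p q : nat) (L : 'I_q -> nat)
  (HL : forall j : 'I_q, (0 < L j)%N)
  (x : 'I_p -> R) (y : forall j : 'I_q, 'I_(L j))
  (th1 th2 : mgm_param R p L) (t : R) :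
  mgm_admissible th1 -> mgm_admissible th2 -> 0 <= t -> t <= 1 ->
  neg_log_pl (mgm_comb t th1 th2) x y
    <= t * neg_log_pl th1 x y + (1 - t) * neg_log_pl th2 x y.
Proof.
move=> [_ [_ P1]] [_ [_ P2]] t0 t1.
rewrite /neg_log_pl.
have hx : \sum_(s < p) - ln (cond_x (mgm_comb t th1 th2) x y s)
   <= \sum_(s < p) (t * - ln (cond_x th1 x y s) + (1 - t) * - ln (cond_x th2 x y s)).
  by apply: ler_sum => s _; apply: term_x.
have hy : \sum_(r < q) - ln (cond_y (mgm_comb t th1 th2) x y r)
   <= \sum_(r < q) (t * - ln (cond_y th1 x y r) + (1 - t) * - ln (cond_y th2 x y r)).
  by apply: ler_sum => r _; apply: term_y.
move: hx hy; rewrite !big_split /= -!mulr_sumr !sumrN.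
set a := \sum_(s < p) _; set b := \sum_(s < p) _; set c := \sum_(s < p) _.
set d := \sum_(r < q) _; set e := \sum_(r < q) _; set f := \sum_(r < q) _.
move=> hx hy; nra.
Qed.
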